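(* Let $\alpha>0$ be fixed. Then for every sufficiently large $N\geq1$, \[ \sum_{1\leq \ell\leq N}\left|\zeta\left(\tfrac12+i\alpha\ell\right)\right|^2\ll N(\log N)^{3/2}, \] where the implied constant depends only on $\alpha$.
   Context: $\zeta$ denotes the Riemann zeta function; the sum is over integers $\ell$. *)

(* Defs.v *)
From Stdlib Require Import Reals.
From Coquelicot Require Import Coquelicot.
Open Scope R_scope.

Definition Cnpow_neg (n : nat) (s : C) : C :=
  ((exp (- Re s * ln (INR n)) * cos (Im s * ln (INR n)))%R,
   (- (exp (- Re s * ln (INR n)) * sin (Im s * ln (INR n))))%R).

Definition eta_partial (s : C) (N : nat) : C :=
  sum_n_m (fun n => scal ((-1) ^ (n - 1)) (Cnpow_neg n s)) 1 N.

Definition eta (s : C) : C :=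
  (real (Lim_seq (fun N => Re (eta_partial s N))),
   real (Lim_seq (fun N => Im (eta_partial s N)))).

(* Riemann zeta function in the strip Re s > 0:
   zeta(s) = eta(s) / (1 - 2^{1-s}).  On the critical line the denominator
   never vanishes, and this equals the analytic continuation of zeta. *)
Definition zeta (s : C) : C :=
  Cdiv (eta s) (Cminus (RtoC 1) (Cnpow_neg 2 (Cminus s (RtoC 1)))).

(* Main.v *)
Require Import Defs.
From Stdlib Require Import Reals Lra Lia Psatz.
From Coquelicot Require Import Coquelicot.
Open Scope R_scope.

Lemma ln_le_sub1 x : 0 < x -> ln x <= x - 1.
Proof. intros Hx. pose proof (exp_ineq1_le (ln x)). rewrite exp_ln in H; lra. Qed.

Lemma ln_diff_bounds a b : 0 < a -> a <= b -> (b - a) / b <= ln b - ln a <= (b - a) / a.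
Proof.
  intros Ha Hab. split.
  - pose proof (ln_le_sub1 (a / b)). rewrite ln_div in H by lra.
    assert (0 < b) by lra.
    assert ((b - a) / b = 1 - a / b) by (field; lra). rewrite H1. apply Rle_trans with (- (ln a - ln b)); [|lra].
    apply Ropp_le_contravar in H. 2: apply Rdiv_lt_0_compat; lra. lra.
  - pose proof (ln_le_sub1 (b / a)). rewrite ln_div in H by lra.
    assert ((b - a) / a = b / a - 1) by (field; lra). rewrite H0. apply H. apply Rdiv_lt_0_compat; lra.
Qed.

Lemma sin_abs_le_pos y : 0 < y -> Rabs (sin y) <= Rabs y.
Proof.
  intros H0. pose proof (sin_lt_x y H0). pose proof (SIN_bound y).
  destruct (Rle_dec y 1).
  + assert (0 <= sin y) by (apply sin_ge_0; pose proof PI2_1; lra).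
    rewrite (Rabs_right (sin y)), (Rabs_right y); lra.
  + unfold Rabs; destruct (Rcase_abs (sin y)); destruct (Rcase_abs y); lra.
Qed.

Lemma sin_abs_le x : Rabs (sin x) <= Rabs x.
Proof.
  destruct (Rtotal_order x 0) as [H|[H|H]].
  - pose proof (sin_abs_le_pos (-x) ltac:(lra)). rewrite sin_neg, !Rabs_Ropp in H0. exact H0.
  - subst. rewrite sin_0, Rabs_R0. lra.
  - apply sin_abs_le_pos; auto.
Qed.

Lemma sin_lower_pos y : 0 <= y -> y <= 2 -> y / 3 <= sin y.
Proof.
  intros H0 H2. pose proof PI2_1.
  destruct (SIN y H0 ltac:(lra)) as [Hs _].
  eapply Rle_trans; [|exact Hs].
  assert (E : sin_lb y = y - y^3/6 + y^5/120 - y^7/5040).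
  { unfold sin_lb, sin_approx, sin_term. simpl. field. }
  rewrite E. assert (y^2 <= 4) by nra.
  assert (0 <= y^5/120 - y^7/5040).
  { replace (y^5/120 - y^7/5040) with (y^5 * (42 - y^2)/5040) by field.
    apply Rdiv_le_0_compat; [|lra]. apply Rmult_le_pos; [apply pow_le|]; lra. }
  assert (y^3/6 <= 2 * y / 3) by nra. lra.
Qed.

Lemma sin_lower y : Rabs y <= PI / 2 -> Rabs y / 3 <= Rabs (sin y).
Proof.
  intros H. pose proof PI_4.
  destruct (Rle_dec 0 y).
  - rewrite Rabs_right in H |- * by lra. pose proof (sin_lower_pos y r ltac:(lra)).
    rewrite Rabs_right; lra.
  - rewrite Rabs_left in H |- * by lra.
    pose proof (sin_lower_pos (-y) ltac:(lra) ltac:(lra)). rewrite sin_neg in H1.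
    rewrite Rabs_left; lra.
Qed.

Lemma sin_shift (k : nat) x : Rabs (sin (x - INR k * PI)) = Rabs (sin x).
Proof.
  induction k.
  - simpl. f_equal. f_equal. ring.
  - rewrite S_INR. replace (x - (INR k + 1) * PI) with ((x - INR k * PI) - PI) by ring.
    rewrite sin_minus, sin_PI, cos_PI. rewrite <- IHk.
    replace (sin (x - INR k * PI) * -1 - cos (x - INR k * PI) * 0) with (- sin (x - INR k * PI)) by ring.
    apply Rabs_Ropp.
Qed.

Lemma nat_floor x : 0 <= x -> exists k : nat, INR k <= x < INR k + 1.
Proof.
  intros Hx. destruct (archimed x) as [H1 H2].
  assert (Hz : (0 <= up x - 1)%Z).
  { assert (0 < IZR (up x)) by lra. apply lt_IZR in H. lia. }
  exists (Z.to_nat (up x - 1)).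
  rewrite INR_IZR_INZ, Znat.Z2Nat.id by lia. rewrite minus_IZR. lra.
Qed.

Lemma near_mult k0 W c0 L x :
  INR k0 * PI <= c0 -> c0 < (INR k0 + 1) * PI -> c0 <= x -> x <= c0 + L ->
  L / PI + 2 <= INR W ->
  exists i, (i < W)%nat /\ Rabs (x - INR (k0 + i) * PI) / 3 <= Rabs (sin x).
Proof.
  intros H1 H2 H3 H4 H5. pose proof PI_RGT_0 as Hpi.
  assert (0 <= c0). { pose proof (pos_INR k0). nra. }
  destruct (nat_floor (x / PI + 1/2)) as [k [Hk1 Hk2]].
  { apply Rplus_le_le_0_compat; [apply Rdiv_le_0_compat|]; lra. }
  assert (Hx1 : x / PI * PI = x) by (field; lra).
  assert (Hc1 : c0 / PI * PI = c0) by (field; lra).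
  assert (Hkk : (k0 <= k)%nat).
  { destruct (Nat.le_gt_cases k0 k) as [h|h]; auto. exfalso.
    assert (INR k + 1 <= INR k0). { rewrite <- S_INR. apply le_INR. lia. }
    assert (INR k0 <= c0 / PI). { apply Rmult_le_reg_r with PI; lra. }
    assert (c0 / PI <= x / PI). { apply Rmult_le_reg_r with PI; lra. }
    lra. }
  exists (k - k0)%nat. split.
  - apply INR_lt. rewrite minus_INR by auto.
    assert (c0 / PI < INR k0 + 1). { apply Rmult_lt_reg_r with PI; lra. }
    assert (x / PI <= c0 / PI + L / PI). { unfold Rdiv. rewrite <- Rmult_plus_distr_r. apply Rmult_le_compat_r; [left; apply Rinv_0_lt_compat; lra| lra]. }
    lra.
  - replace (k0 + (k - k0))%nat with k by lia.
    rewrite <- (sin_shift k x). apply sin_lower.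
    assert (Rabs (x / PI - INR k) <= 1/2) by (apply Rabs_le; lra).
    replace (x - INR k * PI) with ((x / PI - INR k) * PI) by (field; lra).
    rewrite Rabs_mult, (Rabs_right PI) by lra. 
    apply Rmult_le_reg_r with (/ PI). apply Rinv_0_lt_compat; lra.
    replace (Rabs (x / PI - INR k) * PI * / PI) with (Rabs (x / PI - INR k)) by (field; lra).
    replace (PI / 2 * / PI) with (1/2) by (field; lra). lra.
Qed.

Lemma sum_Sm_R (f : nat -> R) n m : (n <= S m)%nat -> sum_n_m f n (S m) = sum_n_m f n m + f (S m).
Proof. intros. rewrite sum_n_Sm by auto. reflexivity. Qed.

Lemma sum_le_R (f g : nat -> R) n m : (forall k, (n <= k <= m)%nat -> f k <= g k) -> sum_n_m f n m <= sum_n_m g n m.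
Proof.
  intros H. destruct (Nat.le_gt_cases n m) as [h|h].
  - induction m.
    + assert (n = 0)%nat by lia. subst. rewrite !sum_n_n. apply H; lia.
    + destruct (Nat.eq_dec n (S m)).
      * subst. rewrite !sum_n_n. apply H; lia.
      * rewrite !sum_Sm_R by lia. apply Rplus_le_compat. apply IHm; [intros; apply H; lia| lia]. apply H; lia.
  - rewrite !sum_n_m_zero by lia. apply Rle_refl.
Qed.

Lemma sum_nonneg_R (f : nat -> R) n m : (forall k, (n <= k <= m)%nat -> 0 <= f k) -> 0 <= sum_n_m f n m.
Proof.
  intros H. apply Rle_trans with (sum_n_m (fun _ => 0) n m).
  - rewrite sum_n_m_const. lra.
  - apply sum_le_R; auto.
Qed.

Lemma sum_abs_R (f : nat -> R) n m : Rabs (sum_n_m f n m) <= sum_n_m (fun k => Rabs (f k)) n m.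
Proof.
  pose proof (norm_sum_n_m (K := R_AbsRing) (V := R_NormedModule) f n m). exact H.
Qed.

Lemma cos_sum_identity th N :
  2 * sin (th / 2) * sum_n_m (fun l => cos (INR l * th)) 1 N = sin ((INR N + 1/2) * th) - sin (th / 2).
Proof.
  induction N.
  - rewrite sum_n_m_zero by lia. simpl. replace ((0 + 1/2) * th) with (th/2) by field. 
    change (@zero R_AbelianMonoid) with 0. ring.
  - rewrite sum_Sm_R by lia. rewrite Rmult_plus_distr_l, IHN.
    rewrite S_INR.
    replace ((INR N + 1 + 1/2) * th) with ((INR N + 1) * th + th/2) by field.
    replace ((INR N + 1/2) * th) with ((INR N + 1) * th - th/2) by field.
    rewrite sin_plus, sin_minus. ring.
Qed.

Lemma cos_sum_le_N th N : Rabs (sum_n_m (fun l => cos (INR l * th)) 1 N) <= INR N.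
Proof.
  eapply Rle_trans; [apply sum_abs_R|].
  eapply Rle_trans. apply sum_le_R with (g := fun _ => 1). intros. pose proof (COS_bound (INR k * th)).
  apply Rabs_le; lra.
  rewrite sum_n_m_const. replace (S N - 1)%nat with N by lia. lra.
Qed.

Lemma cos_sum_sin th N : Rabs (sin (th / 2)) * Rabs (sum_n_m (fun l => cos (INR l * th)) 1 N) <= 1.
Proof.
  pose proof (cos_sum_identity th N).
  assert (Rabs (2 * sin (th / 2) * sum_n_m (fun l => cos (INR l * th)) 1 N) <= 2).
  { rewrite H. pose proof (SIN_bound ((INR N + 1/2) * th)). pose proof (SIN_bound (th/2)).
    apply Rabs_le; lra. }
  rewrite !Rabs_mult in H0. rewrite Rabs_right in H0 by lra. lra.
Qed.

Definition psi (N y : R) := N / (1 + N * Rabs y).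

Lemma F_bound F N y s : 0 < N -> 0 <= F -> F <= N -> s * F <= 1 -> Rabs y / 3 <= s ->
  F <= 4 * psi N y.
Proof.
  intros HN HF1 HF2 Hs Hy. unfold psi. pose proof (Rabs_pos y).
  apply Rmult_le_reg_r with (1 + N * Rabs y). nra.
  replace (4 * (N / (1 + N * Rabs y)) * (1 + N * Rabs y)) with (4 * N) by (field; nra).
  assert (F * Rabs y <= 3) by nra. nra.
Qed.

Definition Gf (N y : R) := if Rle_dec 0 y then ln (1 + N * y) else - ln (1 - N * y).

Lemma psi_le_N N y : 0 < N -> psi N y <= N.
Proof. intros. unfold psi. pose proof (Rabs_pos y).
  apply Rmult_le_reg_r with (1 + N * Rabs y). nra.
  replace (N / (1 + N * Rabs y) * (1 + N * Rabs y)) with N by (field; nra). nra. Qed.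

Lemma psi_pos N y : 0 < N -> 0 <= psi N y.
Proof. intros. unfold psi. pose proof (Rabs_pos y). apply Rdiv_le_0_compat; nra. Qed.

Lemma posinc N g y y' : 0 < N -> 0 < g -> 0 <= y -> y + g <= y' ->
  g * psi N y' <= Gf N y' - Gf N y.
Proof.
  intros HN Hg Hy Hy'. unfold Gf. destruct (Rle_dec 0 y'); [|lra]. destruct (Rle_dec 0 y); [|lra].
  destruct (ln_diff_bounds (1 + N * y) (1 + N * y')) as [H _]; try nra.
  eapply Rle_trans; [|exact H]. unfold psi. rewrite Rabs_right by lra.
  replace (1 + N * y' - (1 + N * y)) with (N * (y' - y)) by ring.
  unfold Rdiv. rewrite <- Rmult_assoc. apply Rmult_le_compat_r. left; apply Rinv_0_lt_compat; nra.
  nra.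
Qed.

Lemma neginc N g y y' : 0 < N -> 0 < g -> y' < 0 -> y + g <= y' ->
  g * psi N y <= Gf N y' - Gf N y.
Proof.
  intros HN Hg Hy Hy'. unfold Gf. destruct (Rle_dec 0 y'); [lra|]. destruct (Rle_dec 0 y); [lra|].
  destruct (ln_diff_bounds (1 - N * y') (1 - N * y)) as [H _]; try nra.
  replace (- ln (1 - N * y') - - ln (1 - N * y)) with (ln (1 - N * y) - ln (1 - N * y')) by ring.
  eapply Rle_trans; [|exact H]. unfold psi. rewrite Rabs_left by lra.
  replace (1 - N * y - (1 - N * y')) with (N * (y' - y)) by ring.
  replace (1 + N * - y) with (1 - N * y) by ring.
  unfold Rdiv. rewrite <- Rmult_assoc. apply Rmult_le_compat_r. left; apply Rinv_0_lt_compat; nra.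
  nra.
Qed.

Lemma Gf_nonneg N y : 0 < N -> 0 <= y -> 0 <= Gf N y.
Proof. intros. unfold Gf. destruct (Rle_dec 0 y); [|lra].
  assert (ln 1 <= ln (1 + N * y)) by (apply ln_le; nra). rewrite ln_1 in H1. lra. Qed.
Lemma Gf_neg N y : 0 < N -> y < 0 -> Gf N y <= 0.
Proof. intros. unfold Gf. destruct (Rle_dec 0 y); [lra|].
  assert (ln 1 <= ln (1 - N * y)) by (apply ln_le; nra). rewrite ln_1 in H1. lra. Qed.

Lemma Gf_abs N y : 0 < N -> Rabs (Gf N y) <= ln (1 + N * Rabs y).
Proof.
  intros. unfold Gf. destruct (Rle_dec 0 y).
  - assert (ln 1 <= ln (1 + N * y)) by (apply ln_le; nra). rewrite ln_1 in H0.
    rewrite Rabs_right by lra. rewrite Rabs_right by lra. lra.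
  - rewrite Rabs_left1. rewrite Rabs_left by lra. replace (1 + N * - y) with (1 - N*y) by ring. lra.
    assert (ln 1 <= ln (1 - N * y)) by (apply ln_le; nra). rewrite ln_1 in H0. lra.
Qed.

Lemma spacing_aux (u : nat -> R) c g N a k : 0 < N -> 0 < g ->
  (forall i, (i < k)%nat -> u (a + i)%nat + g <= u (a + S i)%nat) ->
  (0 <= u (a + k)%nat - c -> sum_n_m (fun m => psi N (u m - c)) a (a + k)
       <= 3 * N + (Gf N (u (a + k)%nat - c) - Gf N (u a - c)) / g) /\
  (u (a + k)%nat - c < 0 -> sum_n_m (fun m => psi N (u m - c)) a (a + k)
       <= N + psi N (u (a + k)%nat - c) + (Gf N (u (a + k)%nat - c) - Gf N (u a - c)) / g).
Proof.
  intros HN Hg. induction k; intros Hsp.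
  - rewrite Nat.add_0_r, sum_n_n. pose proof (psi_le_N N (u a - c) HN). pose proof (psi_pos N (u a - c) HN).
    replace ((Gf N (u a - c) - Gf N (u a - c)) / g) with 0 by (field; lra). split; intros; lra.
  - assert (IH := IHk (fun i Hi => Hsp i ltac:(lia))).
    specialize (Hsp k ltac:(lia)).
    replace (a + S k)%nat with (S (a + k)) in * by lia.
    rewrite sum_Sm_R by lia.
    set (y := u (a + k)%nat - c) in *. set (y' := u (S (a + k)) - c).
    set (S0 := sum_n_m (fun m : nat => psi N (u m - c)) a (a + k)) in *.
    set (T0 := Gf N (u a - c)) in *.
    assert (Hyy : y + g <= y') by (unfold y, y'; lra).
    destruct IH as [IH1 IH2].
    pose proof (psi_le_N N y HN). pose proof (psi_le_N N y' HN).
    pose proof (psi_pos N y HN). pose proof (psi_pos N y' HN).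
    assert (Hdiv : forall p q, p <= q -> p / g <= q / g).
    { intros. unfold Rdiv. apply Rmult_le_compat_r; [left; apply Rinv_0_lt_compat|]; lra. }
    assert (Hdd : forall p q, p / g + q / g = (p + q) / g) by (intros; field; lra).
    destruct (Rle_dec 0 y) as [Hy|Hy].
    + pose proof (posinc N g y y' HN Hg Hy Hyy).
      assert (psi N y' <= (Gf N y' - Gf N y) / g).
      { apply Rmult_le_reg_l with g; auto. replace (g * ((Gf N y' - Gf N y) / g)) with (Gf N y' - Gf N y) by (field; lra). lra. }
      specialize (IH1 Hy).
      split; intros.
      * replace ((Gf N y' - T0) / g) with ((Gf N y - T0) / g + (Gf N y' - Gf N y) / g) by (field; lra). lra.
      * exfalso; lra.
    + apply Rnot_le_lt in Hy. specialize (IH2 Hy).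
      destruct (Rle_dec 0 y') as [Hy'|Hy'].
      * split; intros; [|lra].
        pose proof (Gf_neg N y HN Hy). pose proof (Gf_nonneg N y' HN Hy').
        assert ((Gf N y - T0) / g <= (Gf N y' - T0) / g) by (apply Hdiv; lra).
        lra.
      * apply Rnot_le_lt in Hy'.
        pose proof (neginc N g y y' HN Hg Hy' Hyy).
        assert (psi N y <= (Gf N y' - Gf N y) / g).
        { apply Rmult_le_reg_l with g; auto. replace (g * ((Gf N y' - Gf N y) / g)) with (Gf N y' - Gf N y) by (field; lra). lra. }
        split; intros; [lra|].
        replace ((Gf N y' - T0) / g) with ((Gf N y - T0) / g + (Gf N y' - Gf N y) / g) by (field; lra). lra.
Qed.

Lemma spacing (u : nat -> R) c g N RR a k : 0 < N -> 0 < g ->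
  (forall i, (i < k)%nat -> u (a + i)%nat + g <= u (a + S i)%nat) ->
  Rabs (u a - c) <= RR -> Rabs (u (a + k)%nat - c) <= RR ->
  sum_n_m (fun m => psi N (u m - c)) a (a + k) <= 3 * N + 2 * ln (1 + N * RR) / g.
Proof.
  intros HN Hg Hsp H1 H2.
  destruct (spacing_aux u c g N a k HN Hg Hsp) as [A1 A2].
  assert (Hd : (Gf N (u (a + k)%nat - c) - Gf N (u a - c)) / g <= 2 * ln (1 + N * RR) / g).
  { unfold Rdiv. apply Rmult_le_compat_r. left; apply Rinv_0_lt_compat; lra.
    pose proof (Gf_abs N (u (a + k)%nat - c) HN). pose proof (Gf_abs N (u a - c) HN).
    assert (ln (1 + N * Rabs (u (a + k)%nat - c)) <= ln (1 + N * RR)).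
    { apply ln_le. pose proof (Rabs_pos (u (a + k)%nat - c)). nra. apply Rplus_le_compat_l. apply Rmult_le_compat_l; lra. }
    assert (ln (1 + N * Rabs (u a - c)) <= ln (1 + N * RR)).
    { apply ln_le. pose proof (Rabs_pos (u a - c)). nra. apply Rplus_le_compat_l. apply Rmult_le_compat_l; lra. }
    apply Rabs_le_between in H. apply Rabs_le_between in H0. lra. }
  destruct (Rle_dec 0 (u (a + k)%nat - c)).
  - specialize (A1 r). lra.
  - specialize (A2 ltac:(lra)). pose proof (psi_le_N N (u (a + k)%nat - c) HN). lra.
Qed.

Lemma sum_zero_R (f : nat -> R) n m : (forall k, (n <= k <= m)%nat -> f k = 0) -> sum_n_m f n m = 0.
Proof.
  intros H. apply Rle_antisym.
  - apply Rle_trans with (sum_n_m (fun _ => 0) n m). apply sum_le_R. intros; rewrite H; auto; lra.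
    rewrite sum_n_m_const; lra.
  - apply sum_nonneg_R. intros; rewrite H; auto; lra.
Qed.

Lemma sum_plus_R (f g : nat -> R) n m : sum_n_m (fun k => f k + g k) n m = sum_n_m f n m + sum_n_m g n m.
Proof. apply (sum_n_m_plus f g). Qed.

Lemma sum_scal_l_R (c : R) (f : nat -> R) n m : sum_n_m (fun k => c * f k) n m = c * sum_n_m f n m.
Proof. apply (sum_n_m_mult_l (K := R_Ring)). Qed.

Lemma sum_ext_R (f g : nat -> R) n m : (forall k, (n <= k <= m)%nat -> f k = g k) -> sum_n_m f n m = sum_n_m g n m.
Proof. apply sum_n_m_ext_loc. Qed.

Lemma sum_chasles_R (f : nat -> R) n m k : (n <= S m)%nat -> (m <= k)%nat ->
  sum_n_m f n k = sum_n_m f n m + sum_n_m f (S m) k.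
Proof. intros. rewrite (sum_n_m_Chasles f n m k) by auto. reflexivity. Qed.

Lemma fubini_R (f : nat -> nat -> R) a b c d :
  sum_n_m (fun i => sum_n_m (fun j => f i j) c d) a b = sum_n_m (fun j => sum_n_m (fun i => f i j) a b) c d.
Proof.
  induction b.
  - destruct a.
    + rewrite sum_n_n. apply sum_ext_R. intros. rewrite sum_n_n. reflexivity.
    + rewrite sum_n_m_zero by lia. rewrite sum_zero_R. reflexivity. intros. rewrite sum_n_m_zero by lia. reflexivity.
  - destruct (Nat.le_gt_cases a (S b)).
    + rewrite sum_Sm_R by lia. rewrite IHb. rewrite <- sum_plus_R. apply sum_ext_R. intros. rewrite sum_Sm_R by lia. reflexivity.
    + rewrite sum_n_m_zero by lia. rewrite sum_zero_R. reflexivity. intros. rewrite sum_n_m_zero by lia. reflexivity.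
Qed.

Lemma triangle_R (H : nat -> nat -> R) P :
  sum_n_m (fun m => sum_n_m (fun n => H m n) 1 m) 1 P = sum_n_m (fun n => sum_n_m (fun m => H m n) n P) 1 P.
Proof.
  induction P.
  - rewrite !sum_n_m_zero by lia. reflexivity.
  - rewrite sum_Sm_R by lia. rewrite IHP.
    rewrite (sum_Sm_R (fun n => sum_n_m (fun m => H m n) n (S P))) by lia.
    rewrite sum_n_n.
    rewrite (sum_Sm_R (fun n => H (S P) n)) by lia.
    assert (sum_n_m (fun n => sum_n_m (fun m => H m n) n (S P)) 1 P =
            sum_n_m (fun n => sum_n_m (fun m => H m n) n P) 1 P + sum_n_m (fun n => H (S P) n) 1 P).
    { rewrite <- sum_plus_R. apply sum_ext_R. intros. rewrite sum_Sm_R by lia. reflexivity. }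
    rewrite H0. lra.
Qed.

Lemma harmonic P : (1 <= P)%nat -> sum_n_m (fun n => / INR n) 1 P <= 1 + ln (INR P).
Proof.
  intros HP. induction P. lia.
  destruct P.
  - rewrite sum_n_n. simpl. rewrite ln_1. lra.
  - rewrite sum_Sm_R by lia. specialize (IHP ltac:(lia)).
    pose proof (ln_diff_bounds (INR (S P)) (INR (S (S P)))) as [H _].
    apply lt_0_INR; lia. apply le_INR; lia.
    rewrite (S_INR (S P)) in H at 1. 
    replace (INR (S P) + 1 - INR (S P)) with 1 in H by ring.
    unfold Rdiv in H. rewrite Rmult_1_l in H. lra.
Qed.

Lemma geom_half J : sum_n_m (fun j => / 2 ^ j) 0 J <= 2 - / 2 ^ J.
Proof.
  induction J.
  - rewrite sum_n_n. simpl. lra.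
  - rewrite sum_Sm_R by lia. simpl. 
    assert (0 < 2 ^ J) by (apply pow_lt; lra).
    replace (/ (2 * 2 ^ J)) with (/2 * / 2 ^ J) by (field; lra). lra.
Qed.

Lemma geom_half2 J : sum_n_m (fun j => / 2 ^ j) 0 J <= 2.
Proof. pose proof (geom_half J). assert (0 < / 2 ^ J) by (apply Rinv_0_lt_compat, pow_lt; lra). lra. Qed.

Definition ind (b : bool) : R := if b then 1 else 0.

Lemma counting q P : (1 <= q)%nat ->
  sum_n_m (fun n => ind (Nat.leb (n * q) P)) 1 P <= INR P / INR q.
Proof.
  intros Hq.
  assert (Hq' : 0 < INR q) by (apply lt_0_INR; lia).
  assert (forall L, (L <= P)%nat -> sum_n_m (fun n => ind (Nat.leb (n * q) P)) 1 L <= INR P / INR q).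
  { induction L; intros HL.
    - rewrite sum_n_m_zero by lia. apply Rdiv_le_0_compat; [apply pos_INR|lra].
    - rewrite sum_Sm_R by lia. unfold ind at 2. destruct (Nat.leb (S L * q) P) eqn:E.
      + apply Nat.leb_le in E.
        assert (sum_n_m (fun n => ind (Nat.leb (n * q) P)) 1 L = INR L).
        { rewrite (sum_ext_R _ (fun _ => 1)). rewrite sum_n_m_const. replace (S L - 1)%nat with L by lia. lra.
          intros. unfold ind. replace (Nat.leb (k * q) P) with true. auto. symmetry. apply Nat.leb_le. nia. }
        rewrite H. rewrite <- S_INR. apply Rmult_le_reg_r with (INR q); auto.
        replace (INR P / INR q * INR q) with (INR P) by (field; lra). rewrite <- mult_INR. apply le_INR. lia.
      + specialize (IHL ltac:(lia)). lra. }
  apply H. lia.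
Qed.

Lemma partition_R (f : nat -> R) (c : nat -> nat) J :
  (forall j, (c j < c (S j))%nat) ->
  sum_n_m f (c 0%nat) (c (S J) - 1)%nat = sum_n_m (fun j => sum_n_m f (c j) (c (S j) - 1)%nat) 0 J.
Proof.
  intros Hc. induction J.
  - rewrite sum_n_n. reflexivity.
  - rewrite sum_Sm_R by lia. rewrite <- IHJ.
    assert (c 0%nat <= c (S J))%nat.
    { clear IHJ. induction J. specialize (Hc 0%nat); lia. specialize (Hc (S J)); lia. }
    rewrite (sum_chasles_R f (c 0%nat) (c (S J) - 1)%nat (c (S (S J)) - 1)%nat).
    replace (S (c (S J) - 1)) with (c (S J)). reflexivity. specialize (Hc J). lia.
    specialize (Hc J). lia. specialize (Hc (S J)). lia.
Qed.

Lemma trunc_R (f : nat -> R) P c d : (c <= P)%nat ->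
  sum_n_m (fun m => if Nat.leb m P then f m else 0) c d = sum_n_m f c (Nat.min d P).
Proof.
  intros Hc. destruct (Nat.le_gt_cases d P).
  - replace (Nat.min d P) with d by lia. apply sum_ext_R. intros. replace (Nat.leb k P) with true. auto. symmetry; apply Nat.leb_le; lia.
  - replace (Nat.min d P) with P by lia. rewrite (sum_chasles_R _ c P d) by lia.
    rewrite (sum_zero_R _ (S P) d). rewrite Rplus_0_r. apply sum_ext_R. intros. replace (Nat.leb k P) with true. auto. symmetry; apply Nat.leb_le; lia.
    intros. replace (Nat.leb k P) with false. auto. symmetry; apply Nat.leb_gt; lia.
Qed.

Definition aw (m : nat) : R := exp (- (1/2) * ln (INR m)).
Definition Cs (N : nat) (th : R) := sum_n_m (fun l => cos (INR l * th)) 1 N.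
Definition Hmn alpha N m n := aw m * aw n * Rabs (Cs N (alpha * (ln (INR m) - ln (INR n)))).

Lemma single_le_sum (f : nat -> R) n m i : (forall k, (n <= k <= m)%nat -> 0 <= f k) -> (n <= i <= m)%nat ->
  f i <= sum_n_m f n m.
Proof.
  intros Hf Hi. destruct (Nat.eq_dec i n).
  - subst. destruct (Nat.eq_dec n m). subst. rewrite sum_n_n; lra.
    rewrite (sum_chasles_R f n n m) by lia. rewrite sum_n_n. 
    assert (0 <= sum_n_m f (S n) m) by (apply sum_nonneg_R; intros; apply Hf; lia). lra.
  - rewrite (sum_chasles_R f n (i - 1) m) by lia. replace (S (i - 1)) with i by lia.
    destruct (Nat.eq_dec i m). subst. rewrite sum_n_n.
    assert (0 <= sum_n_m f n (m - 1)) by (apply sum_nonneg_R; intros; apply Hf; lia). lra.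
    rewrite (sum_chasles_R f i i m) by lia. rewrite sum_n_n.
    assert (0 <= sum_n_m f n (i - 1)) by (apply sum_nonneg_R; intros; apply Hf; lia).
    assert (0 <= sum_n_m f (S i) m) by (apply sum_nonneg_R; intros; apply Hf; lia). lra.
Qed.

Lemma ln4 : ln 4 = 2 * ln 2.
Proof. replace 4 with (2 * 2) by ring. rewrite ln_mult by lra. ring. Qed.

Lemma INR_n4j n j : INR (n * 4 ^ j) = INR n * 4 ^ j.
Proof. rewrite mult_INR, pow_INR. simpl. replace (1+1+1+1) with 4 by ring. reflexivity. Qed.

Lemma ln_n4j n j : (1 <= n)%nat -> ln (INR (n * 4 ^ j)) = ln (INR n) + INR j * (2 * ln 2).
Proof.
  intros. rewrite INR_n4j. rewrite ln_mult. rewrite ln_pow by lra. rewrite ln4. reflexivity.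
  apply lt_0_INR; lia. apply pow_lt; lra.
Qed.

Lemma aw_sq n : (1 <= n)%nat -> aw n * aw n = / INR n.
Proof.
  intros. unfold aw. rewrite <- exp_plus. replace (- (1/2) * ln (INR n) + - (1/2) * ln (INR n)) with (- ln (INR n)) by field.
  rewrite exp_Ropp, exp_ln. reflexivity. apply lt_0_INR; lia.
Qed.

Lemma aw_pos n : 0 < aw n.
Proof. apply exp_pos. Qed.

Lemma exp_mono x y : x <= y -> exp x <= exp y.
Proof. intros [H|H]. left; apply exp_increasing; auto. subst; lra. Qed.

Lemma exp_jln2 j : exp (INR j * ln 2) = 2 ^ j.
Proof. rewrite <- ln_pow by lra. apply exp_ln. apply pow_lt; lra. Qed.

Lemma weight_bound n j m : (1 <= n)%nat -> (n * 4 ^ j <= m)%nat -> aw m * aw n <= / (INR n * 2 ^ j).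
Proof.
  intros Hn Hm.
  assert (Hp : (0 < n * 4 ^ j)%nat). { pose proof (Nat.pow_nonzero 4 j). nia. }
  assert (H1 : aw m <= aw (n * 4 ^ j)).
  { unfold aw. apply exp_mono. assert (ln (INR (n * 4 ^ j)) <= ln (INR m)).
    apply ln_le. apply lt_0_INR; lia. apply le_INR; lia. lra. }
  assert (H2 : aw (n * 4 ^ j) = aw n * / 2 ^ j).
  { unfold aw. rewrite ln_n4j by auto. rewrite <- exp_jln2, <- exp_Ropp, <- exp_plus. f_equal. field. }
  rewrite H2 in H1. pose proof (aw_pos n). pose proof (aw_pos m).
  apply Rle_trans with (aw n * / 2 ^ j * aw n). apply Rmult_le_compat_r; lra.
  replace (aw n * / 2 ^ j * aw n) with (aw n * aw n * / 2 ^ j) by ring. rewrite aw_sq by auto.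
  rewrite Rinv_mult. lra.
Qed.

Lemma u_bounds alpha n j m : 0 < alpha -> (1 <= n)%nat -> (n * 4 ^ j <= m)%nat -> (m <= n * 4 ^ S j)%nat ->
  INR j * alpha * ln 2 <= alpha / 2 * (ln (INR m) - ln (INR n)) <= INR j * alpha * ln 2 + alpha * ln 2.
Proof.
  intros Ha Hn H1 H2.
  assert (Hp : (0 < n * 4 ^ j)%nat). { pose proof (Nat.pow_nonzero 4 j). nia. }
  assert (L1 : ln (INR (n * 4 ^ j)) <= ln (INR m)). { apply ln_le. apply lt_0_INR; lia. apply le_INR; lia. }
  assert (L2 : ln (INR m) <= ln (INR (n * 4 ^ S j))). { apply ln_le. apply lt_0_INR; lia. apply le_INR; lia. }
  rewrite ln_n4j in L1, L2 by auto. rewrite S_INR in L2. split; nra.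
Qed.

Lemma block_bound alpha N n j P W k0 :
  0 < alpha -> (1 <= N)%nat -> (1 <= n)%nat -> (n * 4 ^ j <= P)%nat ->
  alpha * ln 2 / PI + 2 <= INR W ->
  INR k0 * PI <= INR j * alpha * ln 2 -> INR j * alpha * ln 2 < (INR k0 + 1) * PI ->
  sum_n_m (fun m => Hmn alpha N m n) (n * 4 ^ j) (Nat.min (n * 4 ^ S j - 1) P)
  <= 4 / (INR n * 2 ^ j) * INR W * (3 * INR N + 2 * ln (1 + INR N * (alpha * ln 2 + PI + INR W * PI)) * (2 * INR n * 4 ^ S j / alpha)).
Proof.
  intros Ha HN Hn HP HW Hk1 Hk2.
  assert (Hp : (0 < n * 4 ^ j)%nat). { pose proof (Nat.pow_nonzero 4 j). nia. }
  assert (Hj4 : (n * 4 ^ S j = 4 * (n * 4 ^ j))%nat) by (simpl; lia).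
  set (a := (n * 4 ^ j)%nat) in *.
  set (b := Nat.min (n * 4 ^ S j - 1) P).
  assert (Hab : (a <= b)%nat) by (unfold b; lia).
  set (u := fun m : nat => alpha / 2 * (ln (INR m) - ln (INR n))).
  set (c := fun i : nat => INR (k0 + i) * PI).
  set (NR := INR N). assert (HNR : 1 <= NR) by (unfold NR; apply (le_INR 1); auto).
  set (RR := alpha * ln 2 + PI + INR W * PI).
  set (g := alpha / (2 * INR n * 4 ^ S j)).
  assert (HW1 : (1 <= W)%nat). { destruct W. simpl in HW. pose proof PI_RGT_0. 
    assert (0 <= alpha * ln 2 / PI). apply Rdiv_le_0_compat; [|lra]. apply Rmult_le_pos; [lra|]. 
    left. rewrite <- ln_1. apply ln_increasing; lra. lra. lia. }
  assert (Hn4 : 0 < INR n * 4 ^ S j). { apply Rmult_lt_0_compat. apply lt_0_INR; lia. apply pow_lt; lra. }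
  assert (Hg : 0 < g). { unfold g. apply Rdiv_lt_0_compat; lra. }
  assert (Hln2 : 0 < ln 2). { rewrite <- ln_1. apply ln_increasing; lra. }
  pose proof PI_RGT_0 as Hpi.
  assert (S1 : forall m, (a <= m <= b)%nat ->
    Hmn alpha N m n <= / (INR n * 2 ^ j) * (4 * sum_n_m (fun i => psi NR (u m - c i)) 0 (W - 1))).
  { intros m Hm. unfold Hmn.
    assert (Hw := weight_bound n j m Hn ltac:(unfold a in Hm; lia)).
    assert (Hu := u_bounds alpha n j m Ha Hn ltac:(unfold a in Hm; lia) ltac:(unfold b in Hm; lia)).
    fold (u m) in Hu.
    destruct (near_mult k0 W (INR j * alpha * ln 2) (alpha * ln 2) (u m) Hk1 Hk2 ltac:(lra) ltac:(lra) HW)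
      as [i [Hi Hs]].
    pose proof (cos_sum_sin (alpha * (ln (INR m) - ln (INR n))) N) as Hcs.
    replace (alpha * (ln (INR m) - ln (INR n)) / 2) with (u m) in Hcs by (unfold u; field).
    pose proof (cos_sum_le_N (alpha * (ln (INR m) - ln (INR n))) N) as HcN.
    fold (Cs N (alpha * (ln (INR m) - ln (INR n)))) in Hcs, HcN.
    set (F := Rabs (Cs N (alpha * (ln (INR m) - ln (INR n))))) in *.
    assert (HF := F_bound F NR (u m - c i) (Rabs (sin (u m))) ltac:(lra) (Rabs_pos _) HcN ltac:(lra) Hs).
    assert (HF2 : psi NR (u m - c i) <= sum_n_m (fun i => psi NR (u m - c i)) 0 (W - 1)).
    { apply (single_le_sum (fun i => psi NR (u m - c i))). intros; apply psi_pos; lra. lia. }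
    pose proof (aw_pos m). pose proof (aw_pos n). 
    assert (0 <= F) by apply Rabs_pos.
    apply Rle_trans with (/ (INR n * 2 ^ j) * F). apply Rmult_le_compat_r; lra.
    apply Rmult_le_compat_l. left; apply Rinv_0_lt_compat, Rmult_lt_0_compat. apply lt_0_INR; lia. apply pow_lt; lra.
    lra. }
  eapply Rle_trans. apply sum_le_R. exact S1.
  rewrite sum_scal_l_R, sum_scal_l_R, fubini_R.
  assert (S3 : forall i, (0 <= i <= W - 1)%nat ->
     sum_n_m (fun m => psi NR (u m - c i)) a b <= 3 * NR + 2 * ln (1 + NR * RR) / g).
  { intros i Hi. replace b with (a + (b - a))%nat by lia.
    apply spacing; try lra.
    - intros i' Hi'. unfold u.
      assert (HI : (a + S i' <= b)%nat) by lia.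
      pose proof (ln_diff_bounds (INR (a + i')) (INR (a + S i'))) as [L1 _].
      apply lt_0_INR; lia. apply le_INR; lia.
      replace (INR (a + S i') - INR (a + i')) with 1 in L1 by (rewrite !plus_INR, S_INR; ring).
      assert (INR (a + S i') <= INR n * 4 ^ S j).
      { rewrite <- INR_n4j. apply le_INR. unfold b in HI. lia. }
      assert (/ (INR n * 4 ^ S j) <= 1 / INR (a + S i')).
      { unfold Rdiv; rewrite Rmult_1_l. apply Rinv_le_contravar; auto. apply lt_0_INR; lia. }
      assert (Hgg : g = alpha / 2 * / (INR n * 4 ^ S j)) by (unfold g; field; repeat split; first [lra | apply pow_nonzero; lra | apply not_0_INR; lia]).
      rewrite Hgg. assert (/ (INR n * 4 ^ S j) <= ln (INR (a + S i')) - ln (INR (a + i'))) by lra.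
      assert (alpha / 2 * / (INR n * 4 ^ S j) <= alpha / 2 * (ln (INR (a + S i')) - ln (INR (a + i')))).
      { apply Rmult_le_compat_l; lra. }
      lra.
    - assert (Hu := u_bounds alpha n j a Ha Hn ltac:(lia) ltac:(lia)). fold (u a) in Hu.
      unfold c. rewrite plus_INR. assert (INR i <= INR W) by (apply le_INR; lia).
      pose proof (pos_INR i). apply Rabs_le. unfold RR. nra.
    - assert (Hu := u_bounds alpha n j (a + (b - a)) Ha Hn ltac:(lia) ltac:(unfold b; lia)). fold (u (a + (b - a))%nat) in Hu.
      unfold c. rewrite plus_INR. assert (INR i <= INR W) by (apply le_INR; lia).
      pose proof (pos_INR i). apply Rabs_le. unfold RR. nra. }
  eapply Rle_trans. apply Rmult_le_compat_l. 
  left; apply Rinv_0_lt_compat, Rmult_lt_0_compat. apply lt_0_INR; lia. apply pow_lt; lra.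
  apply Rmult_le_compat_l. lra. apply sum_le_R. exact S3.
  rewrite sum_n_m_const. replace (S (W - 1) - 0)%nat with W by lia.
  assert (Hginv : 2 * ln (1 + NR * RR) / g = 2 * ln (1 + NR * RR) * (2 * INR n * 4 ^ S j / alpha)).
  { unfold g; field; repeat split; first [lra | apply pow_nonzero; lra | apply not_0_INR; lia]. }
  rewrite Hginv. apply Req_le. unfold Rdiv. ring.
Qed.

Lemma Hmn_nonneg alpha N m n : 0 <= Hmn alpha N m n.
Proof. unfold Hmn. pose proof (aw_pos m). pose proof (aw_pos n). pose proof (Rabs_pos (Cs N (alpha * (ln (INR m) - ln (INR n))))). 
  apply Rmult_le_pos; [apply Rmult_le_pos|]; lra. Qed.

Lemma pow4 j : 4 ^ j = 2 ^ j * 2 ^ j.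
Proof. rewrite <- Rpow_mult_distr. f_equal. Qed.

Lemma inner_bound alpha N n P W :
  0 < alpha -> (1 <= N)%nat -> (1 <= n)%nat -> (n <= P)%nat ->
  alpha * ln 2 / PI + 2 <= INR W ->
  sum_n_m (fun m => Hmn alpha N m n) n P <=
  24 * INR W * INR N / INR n +
  64 * INR W * ln (1 + INR N * (alpha * ln 2 + PI + INR W * PI)) / alpha *
    sum_n_m (fun j => ind (Nat.leb (n * 4 ^ j) P) * 2 ^ j) 0 P.
Proof.
  intros Ha HN Hn HnP HW.
  set (Lg := ln (1 + INR N * (alpha * ln 2 + PI + INR W * PI))).
  set (f := fun m => Hmn alpha N m n).
  set (ft := fun m => if Nat.leb m P then f m else 0).
  set (c := fun j => (n * 4 ^ j)%nat).
  assert (Hc : forall j, (c j < c (S j))%nat).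
  { intros j. unfold c. simpl. pose proof (Nat.pow_nonzero 4 j). nia. }
  assert (HcP : (P <= c (S P) - 1)%nat).
  { unfold c. assert (forall k, (k < 4 ^ k)%nat). { induction k; simpl; lia. }
    specialize (H (S P)). nia. }
  assert (E1 : sum_n_m f n P = sum_n_m ft (c 0%nat) (c (S P) - 1)%nat).
  { unfold ft. rewrite trunc_R. replace (Nat.min (c (S P) - 1) P) with P by lia.
    replace (c 0%nat) with n. reflexivity. unfold c; simpl; lia. unfold c; simpl; lia. }
  change (sum_n_m (fun m => Hmn alpha N m n) n P) with (sum_n_m f n P).
  rewrite E1, (partition_R ft c P Hc).
  assert (Hln2 : 0 < ln 2). { rewrite <- ln_1. apply ln_increasing; lra. }
  assert (HLg : 0 <= Lg).
  { unfold Lg. rewrite <- ln_1. apply ln_le. lra. pose proof (pos_INR N). pose proof (pos_INR W). pose proof PI_RGT_0.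
    assert (0 <= INR N * (alpha * ln 2 + PI + INR W * PI)). apply Rmult_le_pos; [lra|]. nra. lra. }
  eapply Rle_trans. apply sum_le_R with
    (g := fun j => 12 * INR W * INR N / INR n * / 2 ^ j + 64 * INR W * Lg / alpha * (ind (Nat.leb (n * 4 ^ j) P) * 2 ^ j)).
  { intros j Hj. unfold ind. destruct (Nat.leb (n * 4 ^ j) P) eqn:E.
    - apply Nat.leb_le in E.
      unfold ft. rewrite trunc_R by (unfold c; lia). unfold c.
      destruct (nat_floor (INR j * alpha * ln 2 / PI)) as [k0 [Hk1 Hk2]].
      { apply Rdiv_le_0_compat. apply Rmult_le_pos; [apply Rmult_le_pos|]; try lra. apply pos_INR. apply PI_RGT_0. }
      pose proof PI_RGT_0.
      assert (INR k0 * PI <= INR j * alpha * ln 2).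
      { assert (EE : INR j * alpha * ln 2 = INR j * alpha * ln 2 / PI * PI) by (field; lra). rewrite EE.
        apply Rmult_le_compat_r; lra. }
      assert (INR j * alpha * ln 2 < (INR k0 + 1) * PI).
      { assert (EE : INR j * alpha * ln 2 = INR j * alpha * ln 2 / PI * PI) by (field; lra). rewrite EE.
        apply Rmult_lt_compat_r; lra. }
      eapply Rle_trans. apply (block_bound alpha N n j P W k0); auto.
      fold Lg.
      assert (0 < INR n) by (apply lt_0_INR; lia).
      assert (0 < 2 ^ j) by (apply pow_lt; lra).
      rewrite pow4. simpl. apply Req_le. field. repeat split; lra.
    - assert (Hz : sum_n_m ft (c j) (c (S j) - 1) = 0).
      { apply sum_zero_R. intros k Hk. unfold ft. apply Nat.leb_gt in E. unfold c in Hk.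
        replace (Nat.leb k P) with false. auto. symmetry. apply Nat.leb_gt. lia. }
      rewrite Hz. assert (0 <= 12 * INR W * INR N / INR n * / 2 ^ j).
      { pose proof (pos_INR W). pose proof (pos_INR N). assert (0 < INR n) by (apply lt_0_INR; lia).
        assert (0 < / 2 ^ j) by (apply Rinv_0_lt_compat, pow_lt; lra).
        apply Rmult_le_pos; [|lra]. apply Rdiv_le_0_compat; [|lra]. nra. }
      lra. }
  rewrite sum_plus_R, sum_scal_l_R, sum_scal_l_R.
  pose proof (geom_half2 P).
  assert (0 <= 12 * INR W * INR N / INR n).
  { pose proof (pos_INR W). pose proof (pos_INR N). assert (0 < INR n) by (apply lt_0_INR; lia).
    apply Rdiv_le_0_compat; [|lra]. nra. }
  fold Lg. nra.
Qed.

Lemma Hmn_sym alpha N m n : Hmn alpha N m n = Hmn alpha N n m.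
Proof.
  unfold Hmn. rewrite (Rmult_comm (aw m) (aw n)). f_equal.
  unfold Cs. f_equal. apply sum_ext_R. intros. 
  replace (INR k * (alpha * (ln (INR n) - ln (INR m)))) with (- (INR k * (alpha * (ln (INR m) - ln (INR n))))) by ring.
  rewrite cos_neg. reflexivity.
Qed.

Lemma jsum_bound P : (1 <= P)%nat ->
  sum_n_m (fun n => sum_n_m (fun j => ind (Nat.leb (n * 4 ^ j) P) * 2 ^ j) 0 P) 1 P <= 2 * INR P.
Proof.
  intros HP. rewrite fubini_R.
  eapply Rle_trans. apply sum_le_R with (g := fun j => INR P * / 2 ^ j).
  { intros j Hj. rewrite (sum_n_m_mult_r (K := R_Ring)). change (mult ?a ?b) with (a * b).
    pose proof (counting (4 ^ j) P ltac:(pose proof (Nat.pow_nonzero 4 j ltac:(lia)); lia)) as Hc.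
    rewrite pow_INR in Hc. replace (INR 4) with 4 in Hc by (simpl; lra).
    rewrite pow4 in Hc. assert (0 < 2 ^ j) by (apply pow_lt; lra).
    apply Rle_trans with (INR P / (2 ^ j * 2 ^ j) * 2 ^ j). apply Rmult_le_compat_r; [lra| apply Hc].
    right. field. lra. }
  rewrite sum_scal_l_R. pose proof (geom_half2 P). pose proof (pos_INR P). nra.
Qed.

Lemma double_bound alpha N P W :
  0 < alpha -> (1 <= N)%nat -> (1 <= P)%nat ->
  alpha * ln 2 / PI + 2 <= INR W ->
  sum_n_m (fun m => sum_n_m (fun n => Hmn alpha N m n) 1 P) 1 P <=
  2 * (24 * INR W * INR N * (1 + ln (INR P)) +
       64 * INR W * ln (1 + INR N * (alpha * ln 2 + PI + INR W * PI)) / alpha * (2 * INR P)).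
Proof.
  intros Ha HN HP HW.
  set (HH := Hmn alpha N).
  set (T := sum_n_m (fun n => sum_n_m (fun m => HH m n) n P) 1 P).
  assert (E : sum_n_m (fun m => sum_n_m (fun n => HH m n) 1 P) 1 P =
     sum_n_m (fun m => sum_n_m (fun n => HH m n) 1 m) 1 P + sum_n_m (fun m => sum_n_m (fun n => HH m n) (S m) P) 1 P).
  { rewrite <- sum_plus_R. apply sum_ext_R. intros m Hm. apply sum_chasles_R; lia. }
  fold HH. rewrite E. rewrite triangle_R. fold T.
  assert (E2 : sum_n_m (fun m => sum_n_m (fun n => HH m n) (S m) P) 1 P <= T).
  { unfold T. apply sum_le_R. intros m Hm.
    rewrite (sum_ext_R (fun n => HH m n) (fun n => HH n m)) by (intros; apply Hmn_sym).
    destruct (Nat.eq_dec m P). subst. rewrite sum_n_m_zero by lia. rewrite sum_n_n. apply Hmn_nonneg.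
    rewrite (sum_chasles_R (fun m0 => HH m0 m) m m P) by lia. rewrite sum_n_n.
    pose proof (Hmn_nonneg alpha N m m) as Hnn. fold HH in Hnn. lra. }
  set (Lg := ln (1 + INR N * (alpha * ln 2 + PI + INR W * PI))).
  assert (E3 : T <= 24 * INR W * INR N * (1 + ln (INR P)) + 64 * INR W * Lg / alpha * (2 * INR P)).
  { unfold T. eapply Rle_trans. apply sum_le_R. intros n Hn. apply (inner_bound alpha N n P W); auto; lia.
    rewrite sum_plus_R. fold Lg. rewrite sum_scal_l_R.
    rewrite (sum_ext_R (fun n => 24 * INR W * INR N / INR n) (fun n => 24 * INR W * INR N * / INR n)) by (intros; unfold Rdiv; reflexivity).
    rewrite sum_scal_l_R.
    pose proof (harmonic P HP). pose proof (jsum_bound P HP).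
    assert (0 <= 24 * INR W * INR N). { pose proof (pos_INR W). pose proof (pos_INR N). nra. }
    assert (0 <= 64 * INR W * Lg / alpha).
    { unfold Lg. assert (0 <= ln (1 + INR N * (alpha * ln 2 + PI + INR W * PI))).
      { rewrite <- ln_1. apply ln_le. lra. pose proof (pos_INR N). pose proof (pos_INR W). pose proof PI_RGT_0.
        assert (Hln2 : 0 < ln 2). { rewrite <- ln_1. apply ln_increasing; lra. }
        assert (0 <= INR N * (alpha * ln 2 + PI + INR W * PI)). apply Rmult_le_pos; [lra|]. nra. lra. }
      apply Rdiv_le_0_compat; [|lra]. pose proof (pos_INR W). nra. }
    apply Rplus_le_compat; apply Rmult_le_compat_l; auto. }
  lra.
Qed.

Definition csum (v : nat -> C) a b : C := @sum_n_m C_AbelianMonoid v a b.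

Lemma csum_Sm (v : nat -> C) a b : (a <= S b)%nat -> csum v a (S b) = Cplus (csum v a b) (v (S b)).
Proof. intros. unfold csum. rewrite sum_n_Sm by auto. reflexivity. Qed.

Lemma csum_nn (v : nat -> C) a : csum v a a = v a.
Proof. unfold csum. apply sum_n_n. Qed.

Lemma csum_fst (v : nat -> C) a b : fst (csum v a b) = sum_n_m (fun n => fst (v n)) a b.
Proof.
  induction b.
  - destruct a. rewrite csum_nn, sum_n_n. reflexivity. unfold csum. rewrite !sum_n_m_zero by lia. reflexivity.
  - destruct (Nat.le_gt_cases a (S b)).
    + rewrite csum_Sm, sum_Sm_R by lia. simpl. rewrite IHb. reflexivity.
    + unfold csum. rewrite !sum_n_m_zero by lia. reflexivity.
Qed.

Lemma csum_snd (v : nat -> C) a b : snd (csum v a b) = sum_n_m (fun n => snd (v n)) a b.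
Proof.
  induction b.
  - destruct a. rewrite csum_nn, sum_n_n. reflexivity. unfold csum. rewrite !sum_n_m_zero by lia. reflexivity.
  - destruct (Nat.le_gt_cases a (S b)).
    + rewrite csum_Sm, sum_Sm_R by lia. simpl. rewrite IHb. reflexivity.
    + unfold csum. rewrite !sum_n_m_zero by lia. reflexivity.
Qed.

Lemma abel_aux (v w z : nat -> C) A k :
  (forall n, (A <= n <= A + k)%nat -> v n = Cmult (w n) (Cminus (z (S n)) (z n))) ->
  (forall n, Cmod (z n) <= 1) ->
  Cmod (Cminus (csum v A (A + k)) (Cmult (w (A + k)%nat) (z (S (A + k))))) <=
    Cmod (w A) + sum_n_m (fun n => Cmod (Cminus (w (n - 1)%nat) (w n))) (S A) (A + k).
Proof.
  intros Hv Hz. induction k.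
  - rewrite Nat.add_0_r, csum_nn, sum_n_m_zero by lia. change (@zero R_AbelianMonoid) with 0.
    rewrite Hv by lia.
    replace (Cminus (Cmult (w A) (Cminus (z (S A)) (z A))) (Cmult (w A) (z (S A)))) with (Copp (Cmult (w A) (z A))) by ring.
    rewrite Cmod_opp, Cmod_mult. pose proof (Cmod_ge_0 (w A)). pose proof (Hz A). nra.
  - replace (A + S k)%nat with (S (A + k)) by lia.
    rewrite csum_Sm by lia. rewrite sum_Sm_R by lia.
    rewrite (Hv (S (A + k))) by lia.
    replace (Cminus (Cplus (csum v A (A + k)) (Cmult (w (S (A + k))) (Cminus (z (S (S (A + k)))) (z (S (A + k))))))
                   (Cmult (w (S (A + k))) (z (S (S (A + k))))))
      with (Cplus (Cminus (csum v A (A + k)) (Cmult (w (A + k)%nat) (z (S (A + k)))))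
                  (Cmult (Cminus (w (A + k)%nat) (w (S (A + k)))) (z (S (A + k))))) by ring.
    eapply Rle_trans. apply Cmod_triangle.
    rewrite Cmod_mult. replace (S (A + k) - 1)%nat with (A + k)%nat by lia.
    assert (IH := IHk (fun n Hn => Hv n ltac:(lia))).
    pose proof (Hz (S (A + k))). pose proof (Cmod_ge_0 (Cminus (w (A + k)%nat) (w (S (A + k))))). nra.
Qed.

Lemma abel_C (v w z : nat -> C) A k :
  (forall n, (A <= n <= A + k)%nat -> v n = Cmult (w n) (Cminus (z (S n)) (z n))) ->
  (forall n, Cmod (z n) <= 1) ->
  Cmod (csum v A (A + k)) <=
    Cmod (w A) + Cmod (w (A + k)%nat) + sum_n_m (fun n => Cmod (Cminus (w (n - 1)%nat) (w n))) (S A) (A + k).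
Proof.
  intros Hv Hz. pose proof (abel_aux v w z A k Hv Hz).
  replace (csum v A (A + k)) with (Cplus (Cminus (csum v A (A + k)) (Cmult (w (A + k)%nat) (z (S (A + k))))) (Cmult (w (A + k)%nat) (z (S (A + k))))) by ring.
  eapply Rle_trans. apply Cmod_triangle. rewrite Cmod_mult.
  pose proof (Hz (S (A + k))). pose proof (Cmod_ge_0 (w (A + k)%nat)). nra.
Qed.

Definition phs t n := PI * (INR n - 1) - t * ln (INR n).
Definition zz t n : C := (cos (phs t n), sin (phs t n)).
Definition Dl t n := PI - t * (ln (INR (S n)) - ln (INR n)).
Definition EE t n : C := (cos (Dl t n), sin (Dl t n)).
Definition ww t n : C := Cdiv (RtoC (aw n)) (Cminus (EE t n) (RtoC 1)).
Definition vv t n : C := ((-1) ^ (n - 1) * (aw n * cos (t * ln (INR n))),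
                          (-1) ^ (n - 1) * (- (aw n * sin (t * ln (INR n))))).

Lemma cs_kpi k x : cos (INR k * PI - x) = (-1) ^ k * cos x /\ sin (INR k * PI - x) = - ((-1) ^ k * sin x).
Proof.
  induction k.
  - simpl. replace (0 * PI - x) with (- x) by lra. rewrite cos_neg, sin_neg. split; lra.
  - rewrite S_INR. replace ((INR k + 1) * PI - x) with ((INR k * PI - x) + PI) by lra.
    rewrite neg_cos, neg_sin. destruct IHk as [H1 H2]. rewrite H1, H2. simpl. split; lra.
Qed.

Lemma vv_eq t n : (1 <= n)%nat -> vv t n = Cmult (RtoC (aw n)) (zz t n).
Proof.
  intros Hn. unfold vv, zz, Cmult, RtoC, phs. simpl.
  replace (PI * (INR n - 1) - t * ln (INR n)) with (INR (n - 1) * PI - t * ln (INR n)) by (rewrite minus_INR by lia; simpl; lra).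
  destruct (cs_kpi (n - 1) (t * ln (INR n))) as [H1 H2]. rewrite H1, H2.
  f_equal; lra.
Qed.

Lemma zz_S t n : zz t (S n) = Cmult (zz t n) (EE t n).
Proof.
  unfold zz, EE, Cmult. simpl.
  replace (phs t (S n)) with (phs t n + Dl t n) by (unfold phs, Dl; rewrite S_INR; lra).
  rewrite cos_plus, sin_plus. f_equal; lra.
Qed.

Lemma cos_Dl t n : (1 <= n)%nat -> 0 <= t -> t <= INR n -> cos (Dl t n) <= 0.
Proof.
  intros Hn Ht Htn. unfold Dl. rewrite S_INR.
  assert (Hn0 : 0 < INR n) by (apply lt_0_INR; lia).
  destruct (ln_diff_bounds (INR n) (INR n + 1) Hn0 ltac:(lra)) as [L1 L2].
  replace (INR n + 1 - INR n) with 1 in L1, L2 by lra.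
  set (d := ln (INR n + 1) - ln (INR n)) in *.
  assert (0 <= t * d). { apply Rmult_le_pos; auto. assert (0 < 1 / (INR n + 1)) by (apply Rdiv_lt_0_compat; lra). lra. }
  assert (t * d <= 1).
  { apply Rle_trans with (t * (1 / INR n)). apply Rmult_le_compat_l; lra.
    unfold Rdiv. rewrite Rmult_1_l. apply Rmult_le_reg_r with (INR n); auto. rewrite Rmult_assoc, Rinv_l by lra. lra. }
  rewrite cos_minus, cos_PI, sin_PI.
  assert (0 <= cos (t * d)). { apply cos_ge_0; pose proof PI2_1; lra. }
  lra.
Qed.

Lemma Cmod_ge1 (x : C) : 1 <= fst x ^ 2 + snd x ^ 2 -> 1 <= Cmod x.
Proof.
  intros H. unfold Cmod. rewrite <- sqrt_1. apply sqrt_le_1_alt. lra.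
Qed.

Lemma EE_mod t n : (1 <= n)%nat -> 0 <= t -> t <= INR n -> 1 <= Cmod (Cminus (EE t n) (RtoC 1)).
Proof.
  intros. apply Cmod_ge1. unfold EE, Cminus, RtoC, Cplus, Copp. simpl.
  pose proof (cos_Dl t n H H0 H1). pose proof (sin2_cos2 (Dl t n)). unfold Rsqr in H3. nra.
Qed.

Lemma EE_nz t n : (1 <= n)%nat -> 0 <= t -> t <= INR n -> Cminus (EE t n) (RtoC 1) <> RtoC 0.
Proof.
  intros H H0 H1 E. pose proof (EE_mod t n H H0 H1). rewrite E in H2. rewrite Cmod_0 in H2. lra.
Qed.

Lemma vv_ww t n : (1 <= n)%nat -> 0 <= t -> t <= INR n ->
  vv t n = Cmult (ww t n) (Cminus (zz t (S n)) (zz t n)).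
Proof.
  intros H H0 H1. rewrite vv_eq by auto. rewrite zz_S. unfold ww.
  pose proof (EE_nz t n H H0 H1). field. exact H2.
Qed.

Lemma zz_mod t n : Cmod (zz t n) <= 1.
Proof. unfold Cmod, zz. simpl. pose proof (sin2_cos2 (phs t n)). unfold Rsqr in H.
  replace (cos (phs t n) * (cos (phs t n) * 1) + sin (phs t n) * (sin (phs t n) * 1)) with 1 by lra.
  rewrite sqrt_1. lra. Qed.

Lemma aw_le1 n : (1 <= n)%nat -> aw n <= 1.
Proof. intros. unfold aw. apply Rle_trans with (exp 0); [|rewrite exp_0; lra]. apply exp_mono.
  assert (ln 1 <= ln (INR n)). { apply ln_le; [lra|]. apply (le_INR 1); auto. } rewrite ln_1 in H0. lra. Qed.

Lemma aw_decr m n : (1 <= m)%nat -> (m <= n)%nat -> aw n <= aw m.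
Proof. intros. unfold aw. apply exp_mono.
  assert (ln (INR m) <= ln (INR n)). { apply ln_le. apply lt_0_INR; lia. apply le_INR; auto. } lra. Qed.

Lemma ww_mod t n : (1 <= n)%nat -> 0 <= t -> t <= INR n -> Cmod (ww t n) <= aw n.
Proof.
  intros. unfold ww. rewrite Cmod_div by (apply EE_nz; auto). rewrite Cmod_R.
  rewrite Rabs_right by (left; apply aw_pos). pose proof (EE_mod t n H H0 H1). pose proof (aw_pos n).
  apply Rmult_le_reg_r with (Cmod (Cminus (EE t n) (RtoC 1))). lra.
  unfold Rdiv. rewrite Rmult_assoc, Rinv_l by lra. nra.
Qed.

Lemma cos_quad d : 2 - 2 * cos d <= d ^ 2.
Proof.
  replace (cos d) with (cos (2 * (d / 2))) by (f_equal; field).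
  rewrite cos_2a_sin. pose proof (Rsqr_le_abs_1 _ _ (sin_abs_le (d / 2))). unfold Rsqr in H.
  replace (d ^ 2) with (4 * ((d/2) * (d/2))) by field. lra.
Qed.

Lemma EE_lip t n m : Cmod (Cminus (EE t n) (EE t m)) <= Rabs (Dl t n - Dl t m).
Proof.
  assert (Hsq : Cmod (Cminus (EE t n) (EE t m)) ^ 2 <= (Dl t n - Dl t m) ^ 2).
  { rewrite Cmod2_alt. unfold EE, Cminus, Cplus, Copp. simpl.
    replace ((cos (Dl t n) + - cos (Dl t m)) * ((cos (Dl t n) + - cos (Dl t m)) * 1) + (sin (Dl t n) + - sin (Dl t m)) * ((sin (Dl t n) + - sin (Dl t m)) * 1))
       with (2 - 2 * cos (Dl t n - Dl t m)).
    2:{ rewrite cos_minus. pose proof (sin2_cos2 (Dl t n)). pose proof (sin2_cos2 (Dl t m)). unfold Rsqr in *. nra. }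
    apply cos_quad. }
  rewrite <- (Rabs_right (Cmod _)) by (apply Rle_ge, Cmod_ge_0).
  apply Rsqr_le_abs_0. unfold Rsqr. simpl in Hsq. lra.
Qed.

Lemma ww_diff t n : (2 <= n)%nat -> 0 <= t -> t <= INR (n - 1) ->
  Cmod (Cminus (ww t (n - 1)) (ww t n)) <= (aw (n - 1) - aw n) + aw n * Rabs (Dl t n - Dl t (n - 1)).
Proof.
  intros Hn Ht Htn.
  assert (Htn' : t <= INR n) by (apply Rle_trans with (INR (n-1)); auto; apply le_INR; lia).
  set (E1 := Cminus (EE t (n - 1)) (RtoC 1)). set (E2 := Cminus (EE t n) (RtoC 1)).
  assert (N1 : E1 <> RtoC 0) by (apply EE_nz; auto; lia).
  assert (N2 : E2 <> RtoC 0) by (apply EE_nz; auto; lia).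
  assert (M1 : 1 <= Cmod E1) by (apply EE_mod; auto; lia).
  assert (M2 : 1 <= Cmod E2) by (apply EE_mod; auto; lia).
  assert (Eq : Cminus (ww t (n - 1)) (ww t n) =
     Cplus (Cdiv (RtoC (aw (n - 1) - aw n)) E1)
           (Cmult (RtoC (aw n)) (Cdiv (Cminus (EE t n) (EE t (n - 1))) (Cmult E1 E2)))).
  { unfold ww. fold E1 E2.
    replace (Cminus (EE t n) (EE t (n - 1))) with (Cminus E2 E1) by (unfold E1, E2; ring).
    rewrite RtoC_minus. field. split; auto. }
  rewrite Eq. eapply Rle_trans. apply Cmod_triangle.
  rewrite Cmod_div by auto. rewrite Cmod_mult, Cmod_div. 2:{ apply Cmult_neq_0; auto. }
  rewrite Cmod_mult, !Cmod_R.
  assert (Hd : 0 <= aw (n - 1) - aw n) by (pose proof (aw_decr (n-1) n ltac:(lia) ltac:(lia)); lra).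
  rewrite (Rabs_right (aw (n - 1) - aw n)) by lra. rewrite (Rabs_right (aw n)) by (left; apply aw_pos).
  pose proof (EE_lip t n (n - 1)). pose proof (aw_pos n).
  pose proof (Cmod_ge_0 (Cminus (EE t n) (EE t (n - 1)))).
  apply Rplus_le_compat.
  - apply Rmult_le_reg_r with (Cmod E1). lra. unfold Rdiv. rewrite Rmult_assoc, Rinv_l by lra. nra.
  - apply Rmult_le_compat_l. lra.
    assert (1 <= Cmod E1 * Cmod E2) by nra.
    apply Rle_trans with (Cmod (Cminus (EE t n) (EE t (n - 1)))); auto.
    apply Rmult_le_reg_r with (Cmod E1 * Cmod E2). lra. unfold Rdiv. rewrite Rmult_assoc, Rinv_l by lra. nra.
Qed.

Lemma Dl_diff t n : (2 <= n)%nat -> 0 <= t ->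
  Rabs (Dl t n - Dl t (n - 1)) <= 2 * t * (/ INR (n - 1) - / INR n).
Proof.
  intros Hn Ht. unfold Dl. replace (S (n - 1)) with n by lia. rewrite S_INR. rewrite minus_INR by lia. simpl.
  set (x := INR n). assert (Hx : 2 <= x) by (unfold x; apply (le_INR 2); auto).
  destruct (ln_diff_bounds (x - 1) x ltac:(lra) ltac:(lra)) as [P1 P2].
  destruct (ln_diff_bounds x (x + 1) ltac:(lra) ltac:(lra)) as [Q1 Q2].
  replace (x - (x - 1)) with 1 in P1, P2 by lra. replace (x + 1 - x) with 1 in Q1, Q2 by lra.
  assert (1 / (x + 1) <= 1 / x) by (apply Rmult_le_compat_l; [lra|]; apply Rinv_le_contravar; lra).
  assert (1 / x <= 1 / (x - 1)) by (apply Rmult_le_compat_l; [lra|]; apply Rinv_le_contravar; lra).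
  assert (1 / (x - 1) - 1 / (x + 1) <= 2 * (/ (x - 1) - / x)).
  { unfold Rdiv. rewrite !Rmult_1_l. 
    replace (/ (x - 1) - / (x + 1)) with (2 / ((x - 1) * (x + 1))) by (field; lra).
    replace (2 * (/ (x - 1) - / x)) with (2 / ((x - 1) * x)) by (field; lra).
    unfold Rdiv. apply Rmult_le_compat_l; [lra|]. apply Rinv_le_contravar; nra. }
  replace (PI - t * (ln (x + 1) - ln x) - (PI - t * (ln x - ln (x - 1))))
    with (t * ((ln x - ln (x - 1)) - (ln (x + 1) - ln x))) by ring.
  rewrite Rabs_mult, Rabs_right by lra. rewrite Rabs_right by lra. 
  replace (2 * t * (/ (x - 1) - / x)) with (t * (2 * (/ (x - 1) - / x))) by ring.
  apply Rmult_le_compat_l; [lra|]. unfold Rdiv in *. rewrite !Rmult_1_l in *. lra.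
Qed.

Lemma telescope (f : nat -> R) A k : sum_n_m (fun n => f (n - 1)%nat - f n) (S A) (A + k) = f A - f (A + k)%nat.
Proof.
  induction k.
  - rewrite Nat.add_0_r. rewrite sum_n_m_zero by lia. change (@zero R_AbelianMonoid) with 0. lra.
  - replace (A + S k)%nat with (S (A + k)) by lia. rewrite sum_Sm_R by lia. rewrite IHk.
    replace (S (A + k) - 1)%nat with (A + k)%nat by lia. lra.
Qed.

Lemma tail_bound t A k : (1 <= A)%nat -> 0 <= t -> t <= INR A -> Cmod (csum (vv t) A (A + k)) <= 5.
Proof.
  intros HA Ht HtA.
  assert (HtA' : forall n, (A <= n)%nat -> t <= INR n) by (intros; apply Rle_trans with (INR A); auto; apply le_INR; auto).
  eapply Rle_trans. apply (abel_C (vv t) (ww t) (zz t) A k).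
  { intros n Hn. apply vv_ww; [lia | auto | apply HtA'; lia]. }
  { intros; apply zz_mod. }
  pose proof (ww_mod t A HA Ht HtA). pose proof (ww_mod t (A + k) ltac:(lia) Ht (HtA' (A + k)%nat ltac:(lia))).
  pose proof (aw_le1 A HA). pose proof (aw_le1 (A + k) ltac:(lia)).
  assert (HS : sum_n_m (fun n => Cmod (Cminus (ww t (n - 1)%nat) (ww t n))) (S A) (A + k) <=
               sum_n_m (fun n => (aw (n - 1)%nat - aw n) + 2 * t * (/ INR (n - 1) - / INR n)) (S A) (A + k)).
  { apply sum_le_R. intros n Hn. eapply Rle_trans. apply ww_diff; try lia; auto. apply HtA'. lia.
    apply Rplus_le_compat_l. pose proof (Dl_diff t n ltac:(lia) Ht). pose proof (aw_le1 n ltac:(lia)).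
    pose proof (aw_pos n). pose proof (Rabs_pos (Dl t n - Dl t (n - 1))).
    apply Rle_trans with (1 * Rabs (Dl t n - Dl t (n - 1))). apply Rmult_le_compat_r; lra. lra. }
  rewrite sum_plus_R in HS. rewrite telescope in HS.
  assert (HT : sum_n_m (fun n => 2 * t * (/ INR (n - 1) - / INR n)) (S A) (A + k) = 2 * t * (/ INR A - / INR (A + k))).
  { rewrite sum_scal_l_R. rewrite (telescope (fun n => / INR n)). reflexivity. }
  assert (0 < INR A) by (apply lt_0_INR; lia).
  assert (0 < / INR (A + k)) by (apply Rinv_0_lt_compat, lt_0_INR; lia).
  assert (t * / INR A <= 1). { apply Rmult_le_reg_r with (INR A); auto. rewrite Rmult_assoc, Rinv_l by lra. lra. }
  pose proof (aw_pos (A + k)). 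
  assert (2 * t * (/ INR A - / INR (A + k)) <= 2). { assert (0 <= t * / INR (A + k)) by nra. nra. }
  lra.
Qed.

Lemma term_vv t n : scal ((-1) ^ (n - 1)) (Cnpow_neg n ((1/2)%R, t)) = vv t n.
Proof. reflexivity. Qed.

Lemma eta_fst t K : fst (eta_partial ((1/2)%R, t) K) = sum_n_m (fun n => fst (vv t n)) 1 K.
Proof.
  unfold eta_partial. induction K.
  - rewrite !sum_n_m_zero by lia. reflexivity.
  - rewrite sum_n_Sm by lia. rewrite sum_Sm_R by lia. change (fst (plus ?a ?b)) with (Rplus (fst a) (fst b)).
    f_equal; try exact IHK; try reflexivity.
Qed.

Lemma eta_snd t K : snd (eta_partial ((1/2)%R, t) K) = sum_n_m (fun n => snd (vv t n)) 1 K.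
Proof.
  unfold eta_partial. induction K.
  - rewrite !sum_n_m_zero by lia. reflexivity.
  - rewrite sum_n_Sm by lia. rewrite sum_Sm_R by lia. change (snd (plus ?a ?b)) with (Rplus (snd a) (snd b)).
    f_equal; try exact IHK; try reflexivity.
Qed.

Lemma snd_le_Cmod (c : C) : Rabs (snd c) <= Cmod c.
Proof.
  unfold Cmod. rewrite <- sqrt_Rsqr_abs. apply sqrt_le_1_alt. unfold Rsqr. 
  pose proof (pow2_ge_0 (fst c)). simpl. nra.
Qed.

Lemma fst_le_Cmod (c : C) : Rabs (fst c) <= Cmod c.
Proof. apply re_le_Cmod. Qed.

Lemma eta_tail t P K : 0 <= t -> t <= INR (S P) -> (P <= K)%nat ->
  Rabs (fst (eta_partial ((1/2)%R, t) K) - fst (eta_partial ((1/2)%R, t) P)) <= 5 /\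
  Rabs (snd (eta_partial ((1/2)%R, t) K) - snd (eta_partial ((1/2)%R, t) P)) <= 5.
Proof.
  intros Ht HtP HK. destruct (Nat.eq_dec K P).
  - subst. rewrite !Rminus_diag, Rabs_R0. lra.
  - set (k := (K - S P)%nat). assert (EK : K = (S P + k)%nat) by (unfold k; lia).
    pose proof (tail_bound t (S P) k ltac:(lia) Ht HtP) as Hb.
    rewrite !eta_fst, !eta_snd.
    rewrite (sum_chasles_R _ 1 P K) by lia. rewrite (sum_chasles_R (fun n => snd (vv t n)) 1 P K) by lia.
    replace (sum_n_m (fun n => fst (vv t n)) 1 P + sum_n_m (fun n => fst (vv t n)) (S P) K - sum_n_m (fun n => fst (vv t n)) 1 P)
      with (sum_n_m (fun n => fst (vv t n)) (S P) K) by lra.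
    replace (sum_n_m (fun n => snd (vv t n)) 1 P + sum_n_m (fun n => snd (vv t n)) (S P) K - sum_n_m (fun n => snd (vv t n)) 1 P)
      with (sum_n_m (fun n => snd (vv t n)) (S P) K) by lra.
    rewrite <- csum_fst, <- csum_snd. rewrite EK.
    split; [eapply Rle_trans; [apply fst_le_Cmod|exact Hb] | eapply Rle_trans; [apply snd_le_Cmod|exact Hb]].
Qed.

Lemma lim_bound (u : nat -> R) c r P : (forall K, (P <= K)%nat -> Rabs (u K - c) <= r) ->
  Rabs (real (Lim_seq u) - c) <= r.
Proof.
  intros H.
  assert (H1 : Rbar_le (Lim_seq (fun _ => c - r)) (Lim_seq u)).
  { apply Lim_seq_le_loc. exists P. intros n Hn. specialize (H n Hn). apply Rabs_le_between in H. lra. }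
  assert (H2 : Rbar_le (Lim_seq u) (Lim_seq (fun _ => c + r))).
  { apply Lim_seq_le_loc. exists P. intros n Hn. specialize (H n Hn). apply Rabs_le_between in H. lra. }
  rewrite Lim_seq_const in H1, H2.
  destruct (Lim_seq u) as [l| |]; simpl in *; try contradiction.
  apply Rabs_le. lra.
Qed.

Lemma eta_close t P : 0 <= t -> t <= INR (S P) ->
  Cmod (Cminus (eta ((1/2)%R, t)) (eta_partial ((1/2)%R, t) P)) <= 10.
Proof.
  intros Ht HtP.
  assert (Hr : Rabs (real (Lim_seq (fun N => Re (eta_partial ((1/2)%R, t) N))) - fst (eta_partial ((1/2)%R, t) P)) <= 5).
  { apply lim_bound with P. intros K HK. apply (eta_tail t P K Ht HtP HK). }
  assert (Hi : Rabs (real (Lim_seq (fun N => Im (eta_partial ((1/2)%R, t) N))) - snd (eta_partial ((1/2)%R, t) P)) <= 5).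
  { apply lim_bound with P. intros K HK. apply (eta_tail t P K Ht HtP HK). }
  eapply Rle_trans. apply Cmod_2Rmax.
  unfold eta, Cminus, Cplus, Copp. simpl.
  assert (sqrt 2 <= 2). { pose proof (sqrt_le_1_alt 2 4 ltac:(lra)) as Hq. replace (sqrt 4) with 2 in Hq. exact Hq. replace 4 with (2*2) by lra. rewrite sqrt_square; lra. }
  assert (0 <= sqrt 2) by apply sqrt_pos.
  assert (Rmax (Rabs (real (Lim_seq (fun N => Re (eta_partial ((1/2)%R, t) N))) + - fst (eta_partial ((1/2)%R, t) P)))
               (Rabs (real (Lim_seq (fun N => Im (eta_partial ((1/2)%R, t) N))) + - snd (eta_partial ((1/2)%R, t) P))) <= 5).
  { apply Rmax_lub; assumption. }
  match goal with |- sqrt 2 * ?M <= _ => assert (0 <= M) by (eapply Rle_trans; [apply Rabs_pos | apply Rmax_l]) end.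
  apply Rle_trans with (2 * 5); [apply Rmult_le_compat; lra | lra].
Qed.

Lemma zeta_eta t : Cmod (zeta ((1/2)%R, t)) ^ 2 <= 7 * Cmod (eta ((1/2)%R, t)) ^ 2.
Proof.
  unfold zeta.
  set (w := Cnpow_neg 2 (Cminus ((1/2)%R, t) (RtoC 1))).
  set (E := exp (1/2 * ln 2)).
  assert (HE : 0 < E) by apply exp_pos.
  assert (HE2 : E * E = 2). { unfold E. rewrite <- exp_plus. replace (1/2 * ln 2 + 1/2 * ln 2) with (ln 2) by field. apply exp_ln; lra. }
  assert (HEb : 1.4 <= E) by nra.
  assert (Hw : Cmod w = E).
  { unfold w, Cnpow_neg, Cmod. simpl.
    assert (Ee : exp (- (1 / 2 + - (1)) * ln (1 + 1)) = E) by (unfold E; f_equal; replace (1+1) with 2 by lra; field).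
    rewrite Ee. set (th := (t + - 0) * ln (1 + 1)).
    transitivity (sqrt (E * E)). f_equal. pose proof (sin2_cos2 th). unfold Rsqr in H. nra.
    apply sqrt_square; lra. }
  assert (Hd : 0.4 <= Cmod (Cminus (RtoC 1) w)).
  { pose proof (Cmod_triangle (Cminus w (RtoC 1)) (RtoC 1)) as Htr.
    replace (Cplus (Cminus w (RtoC 1)) (RtoC 1)) with w in Htr by ring. rewrite Cmod_1 in Htr.
    replace (Cminus w (RtoC 1)) with (Copp (Cminus (RtoC 1) w)) in Htr by ring. rewrite Cmod_opp in Htr. lra. }
  assert (Hnz : Cminus (RtoC 1) w <> RtoC 0). { intro Z. rewrite Z, Cmod_0 in Hd. lra. }
  rewrite Cmod_div by exact Hnz.
  pose proof (Cmod_ge_0 (eta ((1/2)%R, t))).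
  set (d := Cmod (Cminus (RtoC 1) w)) in *. set (e := Cmod (eta ((1/2)%R, t))) in *.
  replace ((e / d) ^ 2) with (e ^ 2 * / (d * d)) by (field; lra).
  assert (/ (d * d) <= 7). { apply Rmult_le_reg_r with (d * d). nra. rewrite Rinv_l by nra. nra. }
  pose proof (pow2_ge_0 e). nra.
Qed.

Lemma sq_sum (x : nat -> R) a b : (sum_n_m x a b) ^ 2 = sum_n_m (fun m => sum_n_m (fun n => x m * x n) a b) a b.
Proof.
  replace ((sum_n_m x a b) ^ 2) with (sum_n_m x a b * sum_n_m x a b) by (simpl; lra).
  rewrite <- (sum_n_m_mult_r (K := R_Ring)). apply sum_ext_R. intros m Hm.
  change (mult (x m) (sum_n_m x a b)) with (x m * sum_n_m x a b).
  rewrite <- sum_scal_l_R. reflexivity.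
Qed.

Definition bb n := (-1) ^ (n - 1) * aw n.

Lemma expand_sq t P :
  (fst (eta_partial ((1/2)%R, t) P)) ^ 2 + (snd (eta_partial ((1/2)%R, t) P)) ^ 2 =
  sum_n_m (fun m => sum_n_m (fun n => bb m * bb n * cos (t * ln (INR m) - t * ln (INR n))) 1 P) 1 P.
Proof.
  rewrite eta_fst, eta_snd, !sq_sum. rewrite <- sum_plus_R. apply sum_ext_R. intros m Hm.
  rewrite <- sum_plus_R. apply sum_ext_R. intros n Hn.
  unfold vv, bb. simpl fst. simpl snd. rewrite cos_minus. lra.
Qed.

Lemma pow_m1_abs k : Rabs ((-1) ^ k) = 1.
Proof. induction k. simpl. rewrite Rabs_R1; lra. simpl. rewrite Rabs_mult, IHk. replace (Rabs (-1)) with 1. lra. rewrite Rabs_left by lra. lra. Qed.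

Lemma lsum_bound alpha N P :
  sum_n_m (fun l => (fst (eta_partial ((1/2)%R, alpha * INR l) P)) ^ 2 + (snd (eta_partial ((1/2)%R, alpha * INR l) P)) ^ 2) 1 N
  <= sum_n_m (fun m => sum_n_m (fun n => Hmn alpha N m n) 1 P) 1 P.
Proof.
  rewrite (sum_ext_R _ (fun l => sum_n_m (fun m => sum_n_m (fun n => bb m * bb n * cos ((alpha * INR l) * ln (INR m) - (alpha * INR l) * ln (INR n))) 1 P) 1 P))
    by (intros; apply expand_sq).
  rewrite fubini_R. apply sum_le_R. intros m Hm.
  rewrite fubini_R. apply sum_le_R. intros n Hn.
  rewrite (sum_ext_R _ (fun l => bb m * bb n * cos (INR l * (alpha * (ln (INR m) - ln (INR n)))))).
  2:{ intros. f_equal. f_equal. ring. }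
  rewrite sum_scal_l_R. fold (Cs N (alpha * (ln (INR m) - ln (INR n)))).
  unfold Hmn. eapply Rle_trans. apply Rle_abs. rewrite !Rabs_mult. unfold bb. rewrite !Rabs_mult, !pow_m1_abs.
  rewrite !Rabs_right by (left; apply aw_pos). lra.
Qed.

Lemma zeta_point t P : 0 <= t -> t <= INR (S P) ->
  Cmod (zeta ((1/2)%R, t)) ^ 2 <= 14 * ((fst (eta_partial ((1/2)%R, t) P)) ^ 2 + (snd (eta_partial ((1/2)%R, t) P)) ^ 2) + 1400.
Proof.
  intros Ht HtP.
  pose proof (zeta_eta t) as Z.
  pose proof (eta_close t P Ht HtP) as Ec.
  set (D := eta_partial ((1/2)%R, t) P) in *.
  set (e := eta ((1/2)%R, t)) in *.
  assert (Hm : Cmod e <= Cmod D + 10).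
  { pose proof (Cmod_triangle (Cminus e D) D) as T. replace (Cplus (Cminus e D) D) with e in T by ring. lra. }
  pose proof (Cmod_ge_0 e). pose proof (Cmod_ge_0 D).
  assert (Q1 : Cmod e * Cmod e <= (Cmod D + 10) * (Cmod D + 10)) by (apply Rmult_le_compat; lra).
  assert (Q3 : Cmod e ^ 2 <= 2 * Cmod D ^ 2 + 200).
  { set (x := Cmod e) in *. set (y := Cmod D) in *. pose proof (Rle_0_sqr (y - 10)) as Q2. unfold Rsqr in Q2. simpl. nra. }
  rewrite (Cmod2_alt D) in Q3. unfold Re, Im in Q3. lra.
Qed.

Lemma rpow_ge L : 1 <= L -> L <= Rpower L (3/2).
Proof.
  intros. unfold Rpower. rewrite <- (exp_ln L) at 1 by lra. apply exp_mono.
  assert (ln 1 <= ln L) by (apply ln_le; lra). rewrite ln_1 in H0. lra.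
Qed.

Theorem lemma2p4 (alpha : R) (halpha : 0 < alpha) :
  exists (K : R) (N0 : nat),
    forall N : nat, (N0 <= N)%nat ->
      sum_n_m (fun l : nat => (Cmod (zeta ((1/2)%R, (alpha * INR l)%R))) ^ 2) 1 N
        <= K * INR N * Rpower (ln (INR N)) (3/2).
Proof.
  pose proof PI_RGT_0 as Hpi.
  assert (Hln2 : 0 < ln 2). { rewrite <- ln_1. apply ln_increasing; lra. }
  destruct (nat_floor (alpha * ln 2 / PI)) as [w0 [Hw1 Hw2]].
  { apply Rdiv_le_0_compat; [|lra]. apply Rmult_le_pos; lra. }
  set (W := (w0 + 3)%nat).
  assert (HW : alpha * ln 2 / PI + 2 <= INR W). { unfold W. rewrite plus_INR. simpl. lra. }
  assert (HW0 : 0 <= INR W) by apply pos_INR.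
  set (RR := alpha * ln 2 + PI + INR W * PI).
  assert (HRR : 0 <= RR). { unfold RR. assert (0 <= alpha * ln 2) by (apply Rmult_le_pos; lra). nra. }
  set (c1 := ln (alpha + 1)). set (c2 := ln (1 + RR)).
  assert (Hc1 : 0 <= c1). { unfold c1. assert (ln 1 <= ln (alpha + 1)) by (apply ln_le; lra). rewrite ln_1 in H. lra. }
  assert (Hc2 : 0 <= c2). { unfold c2. assert (ln 1 <= ln (1 + RR)) by (apply ln_le; lra). rewrite ln_1 in H. lra. }
  set (K0 := 28 * (24 * INR W * (2 + c1) + 128 * INR W * (1 + c2) * (alpha + 1) / alpha) + 1400).
  exists K0, 3%nat. intros N HN.
  set (n := INR N).
  assert (Hn3 : 3 <= n) by (unfold n; replace 3 with (INR 3) by (simpl; lra); apply le_INR; auto).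
  set (L := ln n).
  assert (HL : 1 <= L). { unfold L. rewrite <- ln_exp with 1. apply ln_le. apply exp_pos. pose proof exp_le_3. lra. }
  destruct (nat_floor (alpha * n)) as [k [Hk1 Hk2]]. { apply Rmult_le_pos; lra. }
  set (P := S k).
  assert (HP1 : (1 <= P)%nat) by (unfold P; lia).
  assert (HPr : INR P = INR k + 1) by (unfold P; apply S_INR).
  assert (S1 : sum_n_m (fun l : nat => (Cmod (zeta ((1/2)%R, (alpha * INR l)%R))) ^ 2) 1 N <=
     sum_n_m (fun l => 14 * ((fst (eta_partial ((1/2)%R, alpha * INR l) P)) ^ 2 + (snd (eta_partial ((1/2)%R, alpha * INR l) P)) ^ 2) + 1400) 1 N).
  { apply sum_le_R. intros l Hl. apply zeta_point.
    apply Rmult_le_pos; [lra|apply pos_INR].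
    assert (INR l <= n) by (unfold n; apply le_INR; lia).
    rewrite S_INR. assert (alpha * INR l <= alpha * n) by (apply Rmult_le_compat_l; lra). lra. }
  rewrite sum_plus_R, sum_scal_l_R, sum_n_m_const in S1.
  replace (INR (S N - 1)) with n in S1 by (unfold n; f_equal; lia).
  pose proof (lsum_bound alpha N P) as S2.
  pose proof (double_bound alpha N P W halpha ltac:(lia) HP1 HW) as S3.
  fold RR in S3. fold n in S3.
  assert (Hp : INR P <= (alpha + 1) * n) by lra.
  assert (Hp0 : 0 < INR P) by (apply lt_0_INR; lia).
  assert (HlnP : 1 + ln (INR P) <= (2 + c1) * L).
  { assert (ln (INR P) <= c1 + L).
    { unfold c1, L. rewrite <- ln_mult by lra. apply ln_le; lra. }
    nra. }
  assert (HLg : ln (1 + n * RR) <= (1 + c2) * L).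
  { assert (ln (1 + n * RR) <= c2 + L).
    { unfold c2, L. rewrite <- ln_mult by lra. apply ln_le. nra. nra. }
    nra. }
  assert (HLg0 : 0 <= ln (1 + n * RR)). { assert (ln 1 <= ln (1 + n * RR)) by (apply ln_le; nra). rewrite ln_1 in H; lra. }
  assert (B1 : 24 * INR W * n * (1 + ln (INR P)) <= 24 * INR W * (2 + c1) * (n * L)).
  { assert (0 <= 24 * INR W * n) by nra. 
    apply Rle_trans with (24 * INR W * n * ((2 + c1) * L)). apply Rmult_le_compat_l; lra. lra. }
  assert (B2 : 64 * INR W * ln (1 + n * RR) / alpha * (2 * INR P) <= 128 * INR W * (1 + c2) * (alpha + 1) / alpha * (n * L)).
  { assert (E1 : 64 * INR W * ln (1 + n * RR) / alpha * (2 * INR P) = (128 * INR W / alpha) * (ln (1 + n * RR) * INR P)) by (field; lra).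
    assert (E2 : 128 * INR W * (1 + c2) * (alpha + 1) / alpha * (n * L) = (128 * INR W / alpha) * (((1 + c2) * L) * ((alpha + 1) * n))) by (field; lra).
    rewrite E1, E2. apply Rmult_le_compat_l. apply Rdiv_le_0_compat; lra.
    apply Rmult_le_compat; lra. }
  assert (HA2 : 0 <= 128 * INR W * (1 + c2) * (alpha + 1) / alpha).
  { apply Rdiv_le_0_compat; [|lra]. repeat apply Rmult_le_pos; lra. }
  assert (Fin : sum_n_m (fun l : nat => (Cmod (zeta ((1/2)%R, (alpha * INR l)%R))) ^ 2) 1 N <= K0 * (n * L)).
  { unfold K0. assert (HnY : n <= n * L) by nra.
    set (Y := n * L) in *. set (A1 := 24 * INR W * (2 + c1)) in *.
    set (A2 := 128 * INR W * (1 + c2) * (alpha + 1) / alpha) in *.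
    lra. }
  assert (HR : L <= Rpower L (3/2)) by (apply rpow_ge; lra).
  assert (HK0 : 0 <= K0).
  { unfold K0. assert (0 <= 24 * INR W * (2 + c1)) by (repeat apply Rmult_le_pos; lra). lra. }
  fold n L. apply Rle_trans with (K0 * (n * L)); auto.
  rewrite Rmult_assoc. apply Rmult_le_compat_l; auto. apply Rmult_le_compat_l; lra.
Qed.
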